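(* Let $G$ be a finite group, $p$ a prime, and suppose $G'\not\subseteq Z(G)$ and one of the following holds: (a) $G'\cong C_{p^2}$ and $\gcd(p-1,|G|)=1$; (b) $G'\cong C_p\times C_p$ and $\gcd(p^2-1,|G|)=1$. Then $|G/C_G(G')|=|G'\cap Z(G)|=|\mathrm{Cl}_G(x)|=p$ for all $x\in G'\setminus Z(G)$.
   Context: $G'$ is the commutator subgroup, $Z(G)$ the center, $C_G(G')$ the centralizer of $G'$ in $G$, and $\mathrm{Cl}_G(x)$ the conjugacy class of $x$ in $G$. *)

(* Defs.v *)
From mathcomp Require Import all_boot all_fingroup all_solvable all_algebra.

(* Main.v *)
Require Import Defs.
From mathcomp Require Import all_boot all_fingroup all_solvable all_algebra.
From mathcomp Require Import all_field all_character.
Set Implicit Arguments.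
Unset Strict Implicit.
Unset Printing Implicit Defensive.
Local Open Scope group_scope.

Lemma Zp_sq_cyclic p : prime p -> cyclic [set: 'Z_(p ^ 2)].
Proof.
move=> pr_p; apply/cyclicP; exists (1%R : 'Z_(p ^ 2)).
apply/esym/eqP; rewrite eqEsubset subsetT /=; apply/subsetP => y _.
apply/cycleP; exists (val y); rewrite Zp_expg; idtac.
apply: val_inj => /=. rewrite [1 %% _]modn_small // mul1n modn_small //.
Qed.

Lemma ZpZp_abelem p : prime p -> p.-abelem [set: 'Z_p * 'Z_p].
Proof.
move=> pr_p; apply/abelemP => //; split.
  apply/centsP => [[a b]] _ [c d] _.
  by rewrite /commute /mulg /= /monoid.mul_pair /=; congr pair; apply: Zp_addC.
move=> [a b] _.
have E n : ((a, b) : 'Z_p * 'Z_p) ^+ n = (a ^+ n, b ^+ n).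
  by elim: n => [|n IH] //; rewrite !expgS IH.
rewrite E !Zp_expg.
have h (x : 'Z_p) : inZp (x * p) = (0 : 'Z_p)%R.
  apply: val_inj => /=; apply/eqP; apply: (dvdn_mull x).
  by rewrite Zp_cast ?prime_gt1.
by rewrite !h.
Qed.

Lemma quo_dvd_p (gT : finGroupType) (G : {group gT}) (p : nat) :
  prime p ->
  (G^`(1) \isog [set: 'Z_(p ^ 2)] /\ coprime (p - 1) #|G|
   \/ G^`(1) \isog [set: 'Z_p * 'Z_p] /\ coprime (p ^ 2 - 1) #|G|) ->
  #|G : 'C_G(G^`(1))| %| p.
Proof.
move=> pr_p hyp.
set D := (G^`(1))%G.
have nDG : G \subset 'N(D) := normal_norm (der_normal 1 G).
have kG : #|G : 'C_G(D)| %| #|G| by exact: dvdn_indexg.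
have p1 : p - 1 = p.-1 by rewrite subn1.
case: hyp => [[iso cop] | [iso cop]].
- have cycD : cyclic D by rewrite (isog_cyclic iso) Zp_sq_cyclic.
  have oD : #|D| = (p ^ 2)%N.
    by rewrite (card_isog iso) cardsT card_ord Zp_cast // (ltn_exp2l 0 2 (prime_gt1 pr_p)).
  have dA : #|G : 'C_G(D)| %| #|Aut D|.
    have: #|G / 'ker_G (conj_aut D)| %| #|Aut D|.
      rewrite (card_isog (first_isog_loc _ _)) //.
      exact: cardSg (Aut_conj_aut _ _).
    rewrite ker_conj_aut card_quotient //.
    by rewrite -{1}(setIidPl nDG); exact: normal_norm (subcent_normal G D).
  rewrite card_Aut_cyclic // oD totient_pfactor // in dA.
  have ck : coprime #|G : 'C_G(D)| p.-1.
    by rewrite coprime_sym -p1; apply: coprime_dvdr kG cop.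
  by rewrite -(Gauss_dvdr _ ck).
- have abD : p.-abelem D by rewrite (isog_abelem iso) ZpZp_abelem.
  have oD : #|D| = (p ^ 2)%N by rewrite (card_isog iso) cardsT card_prod card_ord Zp_cast ?prime_gt1.
  have ntD : D :!=: 1.
    by rewrite -cardG_gt1 oD (ltn_exp2l 0 2 (prime_gt1 pr_p)).
  have dimD : 'dim D = 2 by rewrite (dim_abelemE abD ntD) oD pfactorK.
  pose rG := abelem_repr abD ntD nDG.
  have dA : #|G : 'C_G(D)| %| #|'GL_('dim D)['F_p]|.
    have: #|G / 'ker_G (reprGLm rG)| %| #|'GL_('dim D)['F_p]|.
      rewrite (card_isog (first_isog_loc _ _)) //.
      exact: cardSg (subsetT _).
    rewrite ker_reprGLm rker_abelem setIA setIid card_quotient //.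
    by rewrite -{1}(setIidPl nDG); exact: normal_norm (subcent_normal G D).
  move: dA; rewrite dimD card_GL_2 card_Fp // => dA.
  have e2 : (p ^ 2 - 1 = p.-1 * p.+1)%N.
    by rewrite -{2}(exp1n 2) subn_sqr subn1 addn1.
  have ck : coprime #|G : 'C_G(D)| (p ^ 2 - 1).
    by rewrite coprime_sym; apply: coprime_dvdr kG cop.
  rewrite e2 coprimeMr in ck; case/andP: ck => c1 c2.
  have ck : coprime #|G : 'C_G(D)| (p.-1 ^ 2 * p.+1).
    by rewrite coprimeMr coprimeXr // c1 c2.
  by rewrite -(Gauss_dvdr _ ck) mulnC mulnA.
Qed.

Theorem lemma3p2 (gT : finGroupType) (G : {group gT}) (p : nat) :
  prime p ->
  ~~ (G^`(1) \subset 'Z(G)) ->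
  (G^`(1) \isog [set: 'Z_(p ^ 2)] /\ coprime (p - 1) #|G|
   \/ G^`(1) \isog [set: 'Z_p * 'Z_p] /\ coprime (p ^ 2 - 1) #|G|) ->
  #|G / 'C_G(G^`(1))| = p /\ #|G^`(1) :&: 'Z(G)| = p /\
  (forall x, x \in G^`(1) :\: 'Z(G) -> #|x ^: G| = p).
Proof.
move=> pr_p nDZ hyp.
have dvd := quo_dvd_p pr_p hyp.
set D := (G^`(1))%G.
have nDG : G \subset 'N(D) := normal_norm (der_normal 1 G).
have sDG : D \subset G := der_sub 1 G.
have oD : #|D| = (p ^ 2)%N.
  case: hyp => [[iso _] | [iso _]].
    by rewrite (card_isog iso) cardsT card_ord Zp_cast // (ltn_exp2l 0 2 (prime_gt1 pr_p)).
  by rewrite (card_isog iso) cardsT card_prod card_ord Zp_cast ?prime_gt1.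
have nCG : G \subset 'N('C_G(D)).
  by rewrite -{1}(setIidPl nDG); exact: normal_norm (subcent_normal G D).
have idx : #|G : 'C_G(D)| = p.
  have [_ /(_ _ dvd) /pred2P[] //] := primeP pr_p.
  move/eqP; rewrite indexg_eq1 => sGC; case/negP: nDZ.
  rewrite subsetI sDG /= centsC; exact: subset_trans sGC (subsetIr _ _).
have cls x : x \in D :\: 'Z(G) -> #|x ^: G| = p.
  case/setDP => Dx nZx.
  rewrite -index_cent1.
  have d1 : #|G : 'C_G[x]| %| p.
    rewrite -idx; apply: indexgS; apply: setIS.
    by rewrite sub_cent1; apply: (subsetP _ x Dx); rewrite centsC.
  have [_ /(_ _ d1) /pred2P[] //] := primeP pr_p.
  move/eqP; rewrite indexg_eq1 => sGC; case/negP: nZx.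
  rewrite inE (subsetP sDG) //= -sub_cent1.
  exact: subset_trans sGC (subsetIr _ _).
split; first by rewrite card_quotient.
split => //.
set S := D :\: 'Z(G).
have actS : [acts G, on S | 'J].
  rewrite astabsJ normsD //.
  exact: normal_norm (center_normal G).
have := acts_sum_card_orbit actS.
rewrite (eq_bigr (fun _ => p)); last first.
  by move=> T /imsetP[x Sx ->]; rewrite orbitJ cls.
rewrite sum_nat_const /S cardsD oD => e.
have dZ : #|D :&: 'Z(G)| %| p ^ 2 by rewrite -oD cardSg // subsetIl.
have pd : p %| p ^ 2 - #|D :&: 'Z(G)| by rewrite -e dvdn_mull.
case/(dvdn_pfactor _ _ pr_p): dZ => k.
case: k => [|[|[|k]]] // _ ek.
- have h1 : 1 <= p ^ 2 by rewrite expn_gt0 prime_gt0.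
  have h2 : p %| p ^ 2 by rewrite (dvdn_exp2l p (isT : 1 <= 2)).
  rewrite ek expn0 (dvdn_subr h1 h2) dvdn1 in pd.
  by rewrite (eqP pd) in pr_p.
- case/negP: nDZ; apply: subset_trans (subsetIr D _).
  have: D :&: 'Z(G) == D by rewrite eqEcard subsetIl ek oD leqnn.
  by move/eqP ->.
Qed.
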